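(* Let $K$ be a kernel on $\Omega\subset\mathbb{R}^d$ and either $K$ positive definite and $\lambda>0$, or $K$ strictly positive definite and $\lambda\ge0$. Let $X_n=\{x_1,\dots,x_n\}\subset\Omega$ be pairwise distinct. Then for all $x\in\Omega$ $$P_n^\lambda(x)^2=\|K(\cdot,x)-s_n^\lambda(K(\cdot,x))\|_{\mathcal{H}}^2=K(x,x)-2\sum_{k=1}^n v_k(x)^2+\sum_{k,l=1}^n v_k(x)v_l(x)(v_k,v_l)_{\mathcal{H}} .$$
   Context: A kernel is positive definite if symmetric with positive semidefinite kernel matrices on pairwise distinct points (strictly: positive definite matrices). $\mathcal{H}=\mathcal{H}_K(\Omega)$ is the native space (reproducing kernel Hilbert space) of $K$. With $A=(K(x_i,x_j))_{i,j=1}^n$, the regularized interpolant of $f:\Omega\to\mathbb{R}$ is $s_n^\lambda(f):=\sum_{j=1}^n\alpha_jK(\cdot,x_j)$ with $(A+\lambda I)\alpha=(f(x_1),\dots,f(x_n))^T$. The regularized power function is $P_n^\lambda(x):=\sup_{f\in\mathcal{H},f\ne0}|f(x)-s_n^\lambda(f)(x)|/\|f\|_{\mathcal{H}}$. Let $A+\lambda I=LL^T$ be the Cholesky factorization, $(\beta_{jk}):=L^{-T}$, and $v_k:=\sum_{j=1}^n\beta_{jk}K(\cdot,x_j)$, $1\le k\le n$. *)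

(* Defs.v *)
From HB Require Import structures.
From mathcomp Require Import all_boot all_order all_algebra.
From mathcomp Require Import boolp classical_sets reals.
Set Implicit Arguments. Unset Strict Implicit. Unset Printing Implicit Defensive.
Import Order.TTheory GRing.Theory Num.Theory.
Local Open Scope ring_scope.

Section Kernels.
Variables (R : realType) (T : Type).

Definition kernel_symmetric (K : T -> T -> R) : Prop :=
  forall x y, K x y = K y x.

Definition kernel_matrix (K : T -> T -> R) (n : nat) (xs : 'I_n -> T) : 'M[R]_n :=
  \matrix_(i, j) K (xs i) (xs j).

Definition qform (n : nat) (M : 'M[R]_n) (c : 'cV[R]_n) : R :=
  \sum_(i < n) \sum_(j < n) c i 0 * c j 0 * M i j.

Definition pos_def_kernel (K : T -> T -> R) : Prop :=
  kernel_symmetric K /\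
  forall (m : nat) (ys : 'I_m -> T), injective ys ->
    forall c : 'cV[R]_m, 0 <= qform (kernel_matrix K ys) c.

Definition strictly_pos_def_kernel (K : T -> T -> R) : Prop :=
  kernel_symmetric K /\
  forall (m : nat) (ys : 'I_m -> T), injective ys ->
    forall c : 'cV[R]_m, c != 0 -> 0 < qform (kernel_matrix K ys) c.

Definition ksec (K : T -> T -> R) (x : T) : T -> R := fun y => K y x.

(* H (a set of functions T -> R) with inner product ip is a (real) Hilbert space
   of functions on T with reproducing kernel K, i.e. the native space H_K(T). *)
Definition native_space (K : T -> T -> R) (H : set (T -> R))
    (ip : (T -> R) -> (T -> R) -> R) : Prop :=
  [/\
      H (fun=> 0) /\
      (forall (a : R) f g, H f -> H g -> H (fun y => a * f y + g y)),
      (forall f g, H f -> H g -> ip f g = ip g f) /\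
      (forall (a : R) f g h, H f -> H g -> H h ->
          ip (fun y => a * f y + g y) h = a * ip f h + ip g h) /\
      (forall f, H f -> 0 <= ip f f) /\
      (forall f, H f -> ip f f = 0 -> f = fun=> 0),
      (forall u : nat -> (T -> R), (forall k, H (u k)) ->
        (forall e : R, 0 < e -> exists N, forall m k, (N <= m)%N -> (N <= k)%N ->
            Num.sqrt (ip (fun y => u m y - u k y) (fun y => u m y - u k y)) < e) ->
        exists g, H g /\ forall e : R, 0 < e -> exists N, forall m, (N <= m)%N ->
            Num.sqrt (ip (fun y => u m y - g y) (fun y => u m y - g y)) < e),
      (forall x, H (ksec K x)) &
      (forall f x, H f -> ip f (ksec K x) = f x)].

Definition reg_interp (K : T -> T -> R) (n : nat) (xs : 'I_n -> T) (lam : R)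
    (f : T -> R) : T -> R :=
  let alpha := invmx (kernel_matrix K xs + lam%:M) *m (\col_i f (xs i)) in
  fun z => \sum_(j < n) alpha j 0 * K z (xs j).

Definition reg_power (K : T -> T -> R) (H : set (T -> R))
    (ip : (T -> R) -> (T -> R) -> R) (n : nat) (xs : 'I_n -> T) (lam : R)
    (x : T) : R :=
  sup [set r | exists f, [/\ H f, f <> (fun=> 0) &
         r = `|f x - reg_interp K xs lam f x| / Num.sqrt (ip f f)]].

Definition lower_tri_pos (n : nat) (L : 'M[R]_n) : Prop :=
  (forall i j : 'I_n, (i < j)%N -> L i j = 0) /\ (forall i, 0 < L i i).

Definition cholv (K : T -> T -> R) (n : nat) (xs : 'I_n -> T) (L : 'M[R]_n)
    (k : 'I_n) : T -> R :=
  let beta := invmx L^T in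
  fun z => \sum_(j < n) beta j k * K z (xs j).

End Kernels.

(* Main.v *)
Require Import Defs.
From HB Require Import structures.
From mathcomp Require Import all_boot all_order all_algebra.
From mathcomp Require Import boolp classical_sets reals.
From mathcomp Require Import lra ring.
Import Order.TTheory GRing.Theory Num.Theory.
Local Open Scope ring_scope.
Set Implicit Arguments. Unset Strict Implicit. Unset Printing Implicit Defensive.

Section Aux.
Variables (R : realType) (T : Type) (K : T -> T -> R) (H : set (T -> R))
  (ip : (T -> R) -> (T -> R) -> R).
Hypothesis hN : native_space K H ip.

Lemma H0 : H (fun=> 0). Proof. by case: hN => [[]]. Qed.
Lemma Hlin a {f g} : H f -> H g -> H (fun y => a * f y + g y).
Proof. by case: hN => [[_ h]] *; apply: h. Qed.
Lemma ipC {f g} : H f -> H g -> ip f g = ip g f.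
Proof. by case: hN => _ [h] *; apply: h. Qed.
Lemma ipL a {f g h} : H f -> H g -> H h ->
          ip (fun y => a * f y + g y) h = a * ip f h + ip g h.
Proof. by case: hN => _ [_ [h' _]] *; apply: h'. Qed.
Lemma ip_ge0 {f} : H f -> 0 <= ip f f.
Proof. by case: hN => _ [_ [_ [h' _]]] *; apply: h'. Qed.
Lemma ip_eq0 {f} : H f -> ip f f = 0 -> f = fun=> 0.
Proof. by case: hN => _ [_ [_ [_ h']]] *; apply: h'. Qed.
Lemma Hk x : H (ksec K x). Proof. by case: hN. Qed.
Lemma ip_rep {f} x : H f -> ip f (ksec K x) = f x.
Proof. by case: hN => _ _ _ _ h; apply: h. Qed.

Lemma ip0l h : H h -> ip (fun=> 0) h = 0.
Proof.
move=> Hh; have := ipL 1 H0 H0 Hh.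
have -> : (fun y : T => 1 * 0 + 0) = (fun=> 0 : R) by apply: funext => y; rewrite mul1r addr0.
lra.
Qed.

Lemma ipR a {f g h} : H f -> H g -> H h ->
          ip h (fun y => a * f y + g y) = a * ip h f + ip h g.
Proof.
move=> Hf Hg Hh; rewrite ipC ?ipL ?(ipC Hh) //; exact: Hlin.
Qed.

Lemma H_sum (I : Type) (r : seq I) (c : I -> R) (f : I -> T -> R) :
  (forall i, H (f i)) -> H (fun y => \sum_(i <- r) c i * f i y).
Proof.
move=> Hf; elim: r => [|i r IH].
  have -> : (fun y => \sum_(i <- [::]) c i * f i y) = fun=> 0 by apply: funext => y; rewrite big_nil.
  exact: H0.
have -> : (fun y => \sum_(j <- i :: r) c j * f j y) =
   (fun y => c i * f i y + (fun y => \sum_(j <- r) c j * f j y) y)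
  by apply: funext => y; rewrite big_cons.
exact: Hlin.
Qed.

Lemma ip_suml (I : Type) (r : seq I) (c : I -> R) (f : I -> T -> R) h :
  (forall i, H (f i)) -> H h ->
  ip (fun y => \sum_(i <- r) c i * f i y) h = \sum_(i <- r) c i * ip (f i) h.
Proof.
move=> Hf Hh; elim: r => [|i r IH].
  have -> : (fun y => \sum_(i <- [::]) c i * f i y) = fun=> 0 by apply: funext => y; rewrite big_nil.
  by rewrite ip0l // big_nil.
have -> : (fun y => \sum_(j <- i :: r) c j * f j y) =
   (fun y => c i * f i y + (fun y => \sum_(j <- r) c j * f j y) y)
  by apply: funext => y; rewrite big_cons.
by rewrite ipL ?IH ?big_cons //; exact: H_sum.
Qed.

Lemma ip_sumr (I : Type) (r : seq I) (c : I -> R) (f : I -> T -> R) h :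
  (forall i, H (f i)) -> H h ->
  ip h (fun y => \sum_(i <- r) c i * f i y) = \sum_(i <- r) c i * ip h (f i).
Proof.
move=> Hf Hh; rewrite ipC ?ip_suml //; last exact: H_sum.
by apply: eq_bigr => i _; rewrite ipC.
Qed.

Lemma Ksym x y : K x y = K y x.
Proof.
have h1 := ip_rep x (Hk y). have h2 := ip_rep y (Hk x).
rewrite /ksec in h1 h2. by rewrite -h1 -h2 ipC //; apply: Hk.
Qed.

Lemma CS f e : H f -> H e -> ip f e ^+ 2 <= ip f f * ip e e.
Proof.
move=> Hf He; have [e0|] := eqVneq (ip e e) 0.
  have -> : e = fun=> 0 by apply: ip_eq0.
  by rewrite ipC ?ip0l ?expr0n ?mulr0 //; apply: H0.
move=> ne; have gt : 0 < ip e e by rewrite lt0r ne ip_ge0.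
pose t := ip f e / ip e e.
have := ip_ge0 (Hlin (- t) He Hf).
rewrite ipL ?ipR //; try exact: Hlin.
rewrite (ipC He Hf).
have : t * ip e e = ip f e by rewrite /t divfK.
move: t => t ht h.
have : 0 <= ip f f * ip e e - ip f e ^+ 2.
  have h2 : 0 <= ip f f - t ^+ 2 * ip e e by rewrite -ht in h; nra.
  have e2 : ip e e * (ip f f - t ^+ 2 * ip e e) = ip f f * ip e e - (t * ip e e) ^+ 2 by ring.
  by rewrite -ht -e2; apply: mulr_ge0 => //; apply: ltW.
lra.
Qed.

End Aux.
Section Main.
Variables (R : realType) (T : Type) (K : T -> T -> R) (H : set (T -> R))
  (ip : (T -> R) -> (T -> R) -> R) (lam : R) (n : nat) (xs : 'I_n -> T) (L : 'M[R]_n).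
Hypothesis hN : native_space K H ip.
Hypothesis hL : lower_tri_pos L.
Hypothesis hM : kernel_matrix K xs + lam%:M = L *m L^T.

Local Notation beta := (invmx L^T).
Local Notation v k := (cholv K xs L k).

Lemma L_unit : L \in unitmx.
Proof.
rewrite unitmxE det_trig; last by apply/is_trig_mxP; case: hL.
by rewrite unitfE lt0r_neq0 // prodr_gt0 // => i _; case: hL.
Qed.

Lemma invM : invmx (kernel_matrix K xs + lam%:M) = beta *m beta^T.
Proof.
rewrite hM.
have U : L *m L^T \in unitmx by rewrite unitmx_mul unitmx_tr L_unit.
have bT : beta^T = invmx L by rewrite trmx_inv trmxK.
have X : (L *m L^T) *m (beta *m beta^T) = 1%:M.
  rewrite -mulmxA (mulmxA L^T) mulmxV ?unitmx_tr ?L_unit // mul1mx bT mulmxV //.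
  exact: L_unit.
by rewrite -[RHS]mul1mx -(mulVmx U) -mulmxA X mulmx1.
Qed.

Definition w (g : T -> R) (k : 'I_n) := \sum_(i < n) beta i k * g (xs i).

Lemma regE g z : reg_interp K xs lam g z = \sum_(k < n) w g k * v k z.
Proof.
rewrite /reg_interp /cholv /= invM -mulmxA.
under [RHS]eq_bigr do rewrite mulr_sumr.
rewrite exchange_big /=; apply: eq_bigr => j _.
rewrite mxE big_distrl /=; apply: eq_bigr => k _.
rewrite /w !mxE.
under eq_bigr do rewrite !mxE.
by rewrite mulrCA mulrA.
Qed.

Lemma Hv k : H (v k).
Proof.
rewrite /cholv /=. exact (H_sum hN (index_enum 'I_n) (fun j => beta j k) (f:=fun j => ksec K (xs j)) (fun j => Hk hN (xs j))).
Qed.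

Lemma ipv f k : H f -> ip f (v k) = w f k.
Proof.
move=> Hf; transitivity (\sum_(j < n) beta j k * ip f (ksec K (xs j))).
  rewrite /cholv /=. exact (ip_sumr hN (index_enum 'I_n) (fun j => beta j k) (f:=fun j => ksec K (xs j)) (fun j => Hk hN (xs j)) Hf).
by apply: eq_bigr => j _; rewrite (ip_rep hN).
Qed.


Lemma sup_eq (S : set R) a : S a -> (forall r, S r -> r <= a) -> sup S = a.
Proof.
move=> Sa ub; apply/eqP; rewrite eq_le; apply/andP; split.
  by apply: ge_sup; [exists a|].
by apply: sup_upper_bound => //; split; [exists a|exists a].
Qed.

Lemma main_gen x :
    let e := fun z => ksec K x z - reg_interp K xs lam (ksec K x) z in
    reg_power K H ip xs lam x ^+ 2 = ip e e /\
    ip e e = K x x - 2 * \sum_(k < n) cholv K xs L k x ^+ 2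
             + \sum_(k < n) \sum_(l < n)
                 cholv K xs L k x * cholv K xs L l x
                 * ip (cholv K xs L k) (cholv K xs L l).
Proof.
move=> e.
have wx k : w (ksec K x) k = v k x.
  by rewrite /w /cholv /=; apply: eq_bigr => i _; rewrite /ksec (Ksym hN).
pose S := fun z => \sum_(k < n) v k x * v k z.
have eE : e = fun z => (-1) * S z + ksec K x z.
  apply: funext => z; rewrite /e regE /S.
  under eq_bigr do rewrite wx.
  by rewrite mulN1r addrC.
have HS : H S by apply: (H_sum hN (index_enum 'I_n) (fun k => v k x) (f:=fun k => v k)) => k; exact: Hv.
have Hx := Hk hN x.
have He : H e by rewrite eE; apply: (Hlin hN).
have key f : H f -> f x - reg_interp K xs lam f x = ip f e.
  move=> Hf; rewrite eE (ipR hN) // (ip_rep hN) // /S.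
  rewrite (ip_sumr hN (index_enum 'I_n) (fun k => v k x) (f:=fun k => v k)) //; last exact: Hv.
  rewrite regE.
  have -> : \sum_(k < n) v k x * ip f (v k) = \sum_(k < n) w f k * v k x.
    by apply: eq_bigr => k _; rewrite ipv // mulrC.
  by rewrite mulN1r addrC.
have ipee : ip e e = K x x - 2 * \sum_(k < n) cholv K xs L k x ^+ 2
             + \sum_(k < n) \sum_(l < n)
                 cholv K xs L k x * cholv K xs L l x
                 * ip (cholv K xs L k) (cholv K xs L l).
  have h1 : ip (ksec K x) e = -1 * S x + K x x.
    by rewrite (ipC hN) // (ip_rep hN) // eE.
  have h2 k : ip (v k) e = -1 * \sum_(l < n) v l x * ip (v k) (v l) + v k x.
    rewrite {1}eE (ipR hN) //; last exact: Hv.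
    rewrite (ip_rep hN); last exact: Hv.
    rewrite /S (ip_sumr hN (index_enum 'I_n) (fun k => v k x) (f:=fun k => v k)) //; exact: Hv.
  rewrite {1}eE (ipL hN) // h1 /S.
  rewrite (ip_suml hN (index_enum 'I_n) (fun k => v k x) (f:=fun k => v k)) //; last exact: Hv.
  under eq_bigr do rewrite h2.
  have A : \sum_(k < n) v k x * (-1 * \sum_(l < n) v l x * ip (v k) (v l) + v k x)
     = - \sum_(k < n) \sum_(l < n) v k x * v l x * ip (v k) (v l) + \sum_(k < n) v k x ^+ 2.
    rewrite -sumrN -big_split; apply: eq_bigr => k _ /=.
    rewrite mulrDr mulN1r mulrN mulr_sumr expr2; congr (- _ + _).
    by apply: eq_bigr => l _; rewrite mulrA.
  rewrite A /=.
  have -> : \sum_(k < n) v k x * v k x = \sum_(k < n) v k x ^+ 2 by apply: eq_bigr => k _; rewrite expr2.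
  lra.
split=> //.
have ge0 := ip_ge0 hN He.
have bnd f : H f -> f <> (fun=> 0) ->
   `|f x - reg_interp K xs lam f x| / Num.sqrt (ip f f) <= Num.sqrt (ip e e).
  move=> Hf nf; rewrite key //.
  have pf : 0 < ip f f.
    rewrite lt0r (ip_ge0 hN) // andbT; apply/eqP => /(ip_eq0 hN Hf); exact: nf.
  rewrite ler_pdivrMr ?sqrtr_gt0 // mulrC -sqrtrM ?(ltW pf) // -sqrtr_sqr.
  by apply: ler_wsqrtr; apply: (CS hN).
rewrite /reg_power.
match goal with |- sup ?X ^+ 2 = _ => set SS := X end.
have [e0|ne] := eqVneq (ip e e) 0.
  rewrite e0.
  have [[r Sr]|nS] := pselect (exists r, SS r).
    have r0 : r = 0.
      case: Sr => f [Hf nf ->]; apply/eqP; rewrite eq_le; apply/andP; split.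
        by have := bnd f Hf nf; rewrite e0 sqrtr0.
      by apply: divr_ge0 => //; apply: sqrtr_ge0.
    rewrite (@sup_eq _ 0) ?expr0n //; first by rewrite -r0.
    move=> r' [f [Hf nf ->]]; by have := bnd f Hf nf; rewrite e0 sqrtr0.
  have -> : SS = set0.
    by apply: funext => r; apply: propext; split => // Sr; apply: nS; exists r.
  by rewrite sup0 expr0n.
rewrite (@sup_eq _ (Num.sqrt (ip e e))) ?sqr_sqrtr //.
  exists e; split => //.
    by move=> ez; move: ne; rewrite ez (ip0l hN (H0 hN)) eqxx.
  rewrite (key e He) ger0_norm //.
  have sp : 0 < Num.sqrt (ip e e) by rewrite sqrtr_gt0 lt0r ne ge0.
  by rewrite -{2}(sqr_sqrtr ge0) expr2 mulfK // lt0r_neq0.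
by move=> r [f [Hf nf ->]]; apply: bnd.
Qed.

End Main.

Theorem proposition3p1 (R : realType) (d : nat) (Omega : set 'rV[R]_d)
    (K : {y : 'rV[R]_d | Omega y} -> {y : 'rV[R]_d | Omega y} -> R)
    (H : set ({y : 'rV[R]_d | Omega y} -> R))
    (ip : ({y : 'rV[R]_d | Omega y} -> R) -> ({y : 'rV[R]_d | Omega y} -> R) -> R)
    (lam : R) (n : nat) (xs : 'I_n -> {y : 'rV[R]_d | Omega y})
    (L : 'M[R]_n) :
  (pos_def_kernel K /\ 0 < lam) \/ (strictly_pos_def_kernel K /\ 0 <= lam) ->
  native_space K H ip ->
  injective xs ->
  lower_tri_pos L ->
  kernel_matrix K xs + lam%:M = L *m L^T ->
  forall x : {y : 'rV[R]_d | Omega y},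
    let e := fun z => ksec K x z - reg_interp K xs lam (ksec K x) z in
    reg_power K H ip xs lam x ^+ 2 = ip e e /\
    ip e e = K x x - 2 * \sum_(k < n) cholv K xs L k x ^+ 2
             + \sum_(k < n) \sum_(l < n)
                 cholv K xs L k x * cholv K xs L l x
                 * ip (cholv K xs L k) (cholv K xs L l).
Proof.
move=> _ hN _ hL hM x. exact: (main_gen hN hL hM x).
Qed.
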